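(* Let $C_\alpha>0$ and consider one of the following three setups for learning rates $\{\alpha_t\}_{t\ge0}$ and interval lengths $\{T_m\}_{m\ge0}$: (a) $\alpha_t=\frac{C_\alpha}{t+3}$ and $T_m=\frac{C_\alpha\ln^{\nu_1}(m+3)}{m+3}$ with $\nu_1\in(0,1)$; (b) $\alpha_t=\frac{C_\alpha}{(t+3)^\nu}$ with $\nu\in(\frac23,1)$ and $T_m=\frac{C_\alpha}{(m+3)^{\nu_2}}$ with $\frac12<\nu_2<\frac{\nu}{2-\nu}$; (c) $\alpha_t=\frac{C_\alpha}{(t+3)\ln^\nu(t+3)}$ with $\nu\in(0,1)$ and $T_m=\frac{C_\alpha}{m+3}$. Define $t_0=0$ and $t_{m+1}=\min\{k:\sum_{t=t_m}^{k-1}\alpha_t\ge T_m\}$ for $m\ge0$. Then there exist a constant $C$ and an integer $m_0$ such that for all $m\ge m_0$ and all $t\ge t_m$, $\alpha_t\le C\,T_m^2$. *)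

(* Defs.v *)
From Stdlib Require Export Reals Lra Lia.
Open Scope R_scope.

Fixpoint sum_range (f : nat -> R) (a n : nat) : R :=
  match n with
  | O => 0
  | S n' => sum_range f a n' + f (a + n')%nat
  end.

(* \sum_{t=a}^{k-1} f t  (empty, = 0, when k <= a). *)
Definition sum_from_to (f : nat -> R) (a k : nat) : R := sum_range f a (k - a).

Definition is_switch_seq (alpha T : nat -> R) (tm : nat -> nat) : Prop :=
  tm O = O /\
  forall m : nat,
    sum_from_to alpha (tm m) (tm (S m)) >= T m /\
    (forall k : nat, sum_from_to alpha (tm m) k >= T m -> (tm (S m) <= k)%nat).

Definition setup_a (Ca : R) (alpha T : nat -> R) : Prop :=
  exists nu1 : R, 0 < nu1 < 1 /\
    (forall t : nat, alpha t = Ca / (INR t + 3)) /\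
    (forall m : nat, T m = Ca * Rpower (ln (INR m + 3)) nu1 / (INR m + 3)).

Definition setup_b (Ca : R) (alpha T : nat -> R) : Prop :=
  exists nu nu2 : R, 2/3 < nu < 1 /\ 1/2 < nu2 < nu / (2 - nu) /\
    (forall t : nat, alpha t = Ca / Rpower (INR t + 3) nu) /\
    (forall m : nat, T m = Ca / Rpower (INR m + 3) nu2).

Definition setup_c (Ca : R) (alpha T : nat -> R) : Prop :=
  exists nu : R, 0 < nu < 1 /\
    (forall t : nat, alpha t = Ca / ((INR t + 3) * Rpower (ln (INR t + 3)) nu)) /\
    (forall m : nat, T m = Ca / (INR m + 3)).

(* Main.v *)
Require Import Defs.
From Stdlib Require Import Reals Lra Lia.
Open Scope R_scope.

Lemma exp_le_mono x y : x <= y -> exp x <= exp y.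
Proof. intros [H|H]; [left; apply exp_increasing; auto | subst; lra]. Qed.
Lemma exp_le_inv x y : exp x <= exp y -> x <= y.
Proof. intros [H|H]; [left; apply exp_lt_inv; auto | right; apply exp_inv; auto]. Qed.
Lemma ln_le_mono x y : 0 < x -> x <= y -> ln x <= ln y.
Proof. intros Hx [H|H]; [left; apply ln_increasing; auto | subst; lra]. Qed.
Lemma ln_le_inv x y : 0 < x -> 0 < y -> ln x <= ln y -> x <= y.
Proof. intros Hx Hy H. rewrite <- (exp_ln x), <- (exp_ln y) by auto. now apply exp_le_mono. Qed.
Lemma ln_le_xm1 z : 0 < z -> ln z <= z - 1.
Proof. intros Hz. pose proof (exp_ineq1_le (ln z)). rewrite exp_ln in H; lra. Qed.

Lemma ln_diff_le y : 0 < y -> ln (y+1) - ln y <= 1 / y.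
Proof.
  intros Hy. assert (E: ln (y+1) = ln ((y+1)/y) + ln y).
  { rewrite <- ln_mult. f_equal. field. lra. apply Rdiv_lt_0_compat; lra. lra. }
  rewrite E. pose proof (ln_le_xm1 ((y+1)/y)).
  assert ((y+1)/y - 1 = 1/y) by (field; lra).
  assert (0 < (y+1)/y) by (apply Rdiv_lt_0_compat; lra). lra.
Qed.
Lemma ln_diff_ge y : 0 < y -> 1 / (y+1) <= ln (y+1) - ln y.
Proof.
  intros Hy. assert (E: ln y = ln (y/(y+1)) + ln (y+1)).
  { rewrite <- ln_mult. f_equal. field. lra. apply Rdiv_lt_0_compat; lra. lra. }
  rewrite E. pose proof (ln_le_xm1 (y/(y+1))).
  assert (y/(y+1) - 1 = - (1/(y+1))) by (field; lra).
  assert (0 < y/(y+1)) by (apply Rdiv_lt_0_compat; lra). lra.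
Qed.

Lemma sum_range_add f a n k : sum_range f a (n + k) = sum_range f a n + sum_range f (a+n) k.
Proof.
  induction k; simpl.
  - rewrite Nat.add_0_r; ring.
  - rewrite Nat.add_succ_r; simpl; rewrite IHk, Nat.add_assoc; ring.
Qed.

Lemma sum_range_le f g a n : (forall i, (a <= i)%nat -> f i <= g i) ->
  sum_range f a n <= sum_range g a n.
Proof. intros H; induction n; simpl; [lra|]. pose proof (H (a+n)%nat ltac:(lia)). lra. Qed.

Lemma sum_range_nonneg f a n : (forall i, (a <= i)%nat -> 0 <= f i) -> 0 <= sum_range f a n.
Proof. intros H; induction n; simpl; [lra|]. pose proof (H (a+n)%nat ltac:(lia)). lra. Qed.

Lemma tele_le f (F : nat -> R) a n : (forall i, (a <= i)%nat -> f i <= F (S i) - F i) ->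
  sum_range f a n <= F (a + n)%nat - F a.
Proof.
  intros H; induction n; simpl.
  - rewrite Nat.add_0_r; lra.
  - pose proof (H (a+n)%nat ltac:(lia)). rewrite Nat.add_succ_r. lra.
Qed.
Lemma tele_ge f (F : nat -> R) a n : (forall i, (a <= i)%nat -> F (S i) - F i <= f i) ->
  F (a + n)%nat - F a <= sum_range f a n.
Proof.
  intros H; induction n; simpl.
  - rewrite Nat.add_0_r; lra.
  - pose proof (H (a+n)%nat ltac:(lia)). rewrite Nat.add_succ_r. lra.
Qed.

Lemma reduce alpha T tm :
  (forall m, 0 < T m) -> (forall t, alpha (S t) <= alpha t) -> is_switch_seq alpha T tm ->
  (exists C m0, forall m n, (m0 <= m)%nat -> (m <= n)%nat ->
      sum_range T 0 m <= sum_range alpha 0 n -> alpha n <= C * T m ^ 2) ->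
  exists (C : R) (m0 : nat),
    forall m : nat, (m0 <= m)%nat ->
      forall t : nat, (tm m <= t)%nat -> alpha t <= C * (T m) ^ 2.
Proof.
  intros HT Hdec [H0 Hsw] [C [m0 HC]].
  assert (Hlt: forall m, (tm m < tm (S m))%nat).
  { intros m. destruct (Hsw m) as [H1 _]. destruct (Nat.lt_ge_cases (tm m) (tm (S m))) as [h|h]; auto.
    exfalso. unfold sum_from_to in H1. replace (tm (S m) - tm m)%nat with 0%nat in H1 by lia.
    simpl in H1. specialize (HT m). lra. }
  assert (Hge: forall m, (m <= tm m)%nat).
  { induction m; [lia|]. specialize (Hlt m). lia. }
  assert (Hsum: forall m, sum_range T 0 m <= sum_range alpha 0 (tm m)).
  { induction m; [rewrite H0; simpl; lra|].
    destruct (Hsw m) as [H1 _]. unfold sum_from_to in H1.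
    specialize (Hlt m).
    replace (tm (S m)) with (tm m + (tm (S m) - tm m))%nat by lia.
    rewrite sum_range_add. simpl. lra. }
  assert (Hmono: forall a k, alpha (a + k)%nat <= alpha a).
  { intros a k; induction k. rewrite Nat.add_0_r; lra. rewrite Nat.add_succ_r. specialize (Hdec (a+k)%nat). lra. }
  exists C, m0. intros m Hm t Ht.
  replace t with (tm m + (t - tm m))%nat by lia.
  eapply Rle_trans. apply Hmono. apply HC; auto.
Qed.


Lemma final_ln x y K : 0 < x -> 0 < y -> 2 * ln y <= ln x + K -> 1 / x <= exp K / y ^ 2.
Proof.
  intros Hx Hy H. apply exp_le_mono in H.
  rewrite exp_plus, exp_ln in H by auto.
  replace (2 * ln y) with (ln y + ln y) in H by ring.
  rewrite exp_plus, exp_ln in H by auto.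
  pose proof (exp_pos K).
  apply Rmult_le_reg_l with (x * y ^ 2). apply Rmult_lt_0_compat; [lra| apply pow_lt; lra].
  replace (x * y ^ 2 * (1 / x)) with (y * y) by (field; lra).
  replace (x * y ^ 2 * (exp K / y ^ 2)) with (x * exp K) by (field; lra). lra.
Qed.

Lemma Rpower_pos x y : 0 < Rpower x y.
Proof. unfold Rpower; apply exp_pos. Qed.

Lemma big_ln_pow nu : 0 < nu -> exists J:nat, forall j, (J <= j)%nat -> 2 <= Rpower (ln (INR j + 3)) nu.
Proof.
  intros Hnu. destruct (INR_archimed 1 (exp (exp (ln 2 / nu))) ltac:(lra)) as [J HJ].
  exists J. intros j Hj. apply le_INR in Hj.
  assert (h1: exp (exp (ln 2 / nu)) <= INR j + 3) by lra.
  apply ln_le_mono in h1; [|apply exp_pos]. rewrite ln_exp in h1.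
  apply ln_le_mono in h1; [|apply exp_pos]. rewrite ln_exp in h1.
  unfold Rpower. rewrite <- (exp_ln 2) by lra. apply exp_le_mono.
  apply Rmult_le_compat_l with (r := nu) in h1; [|lra].
  replace (nu * (ln 2 / nu)) with (ln 2) in h1 by (field; lra). lra.
Qed.

Lemma INR3 n : 0 < INR n + 3.
Proof. pose proof (pos_INR n); lra. Qed.
Lemma INR2 n : 0 < INR n + 2.
Proof. pose proof (pos_INR n); lra. Qed.


Lemma ln3pos n : 0 < ln (INR n + 3).
Proof. rewrite <- ln_1. apply ln_increasing; pose proof (pos_INR n); lra. Qed.

Lemma case_c Ca alpha T tm : 0 < Ca -> setup_c Ca alpha T -> is_switch_seq alpha T tm ->
  exists (C : R) (m0 : nat),
    forall m : nat, (m0 <= m)%nat ->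
      forall t : nat, (tm m <= t)%nat -> alpha t <= C * (T m) ^ 2.
Proof.
  intros HCa [nu [Hnu [Ha HT]]] Hsw.
  apply reduce with (tm := tm); auto.
  - intros m; rewrite HT. apply Rdiv_lt_0_compat; auto using INR3.
  - intros t; rewrite !Ha, S_INR. pose proof (INR3 t). unfold Rdiv.
    apply Rmult_le_compat_l; [lra|].
    pose proof (Rpower_pos (ln (INR t + 3)) nu).
    apply Rinv_le_contravar. nra.
    apply Rmult_le_compat; try lra.
    apply Rle_Rpower_l; [lra|]. split. apply ln3pos.
    apply ln_le_mono; lra.
  - destruct (big_ln_pow nu (proj1 Hnu)) as [N HN].
    set (SN := sum_range alpha 0 N).
    set (K := 2 * (SN + Ca * ln 3 - Ca / 2 * ln (INR N + 2)) / Ca).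
    exists (exp K / Ca), N. intros m n Hm Hn Hs.
    assert (Hab: forall i, (N <= i)%nat -> alpha i <= Ca / 2 * (1 / (INR i + 3))).
    { intros i Hi. rewrite Ha. specialize (HN i Hi). pose proof (INR3 i).
      replace (Ca / 2 * (1 / (INR i + 3))) with (Ca / (2 * (INR i + 3))) by (field; lra).
      unfold Rdiv. apply Rmult_le_compat_l; [lra|]. apply Rinv_le_contravar; nra. }
    assert (Su: sum_range alpha N (n - N) <= Ca / 2 * ln (INR (N + (n - N)) + 2) - Ca / 2 * ln (INR N + 2)).
    { apply (tele_le alpha (fun k => Ca / 2 * ln (INR k + 2))). intros i Hi.
      eapply Rle_trans; [apply Hab; auto|].
      rewrite S_INR. pose proof (ln_diff_ge (INR i + 2) (INR2 i)).
      replace (INR i + 1 + 2) with (INR i + 2 + 1) by ring.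
      replace (INR i + 3) with (INR i + 2 + 1) by ring.
      replace (Ca / 2 * ln (INR i + 2 + 1) - Ca / 2 * ln (INR i + 2)) with (Ca / 2 * (ln (INR i + 2 + 1) - ln (INR i + 2))) by ring.
      apply Rmult_le_compat_l; lra. }
    assert (Sl: Ca * ln (INR (0 + m) + 3) - Ca * ln (INR 0 + 3) <= sum_range T 0 m).
    { apply (tele_ge T (fun k => Ca * ln (INR k + 3))). intros i Hi.
      rewrite HT, S_INR. pose proof (ln_diff_le (INR i + 3) (INR3 i)).
      replace (INR i + 1 + 3) with (INR i + 3 + 1) by ring.
      replace (Ca * ln (INR i + 3 + 1) - Ca * ln (INR i + 3)) with (Ca * (ln (INR i + 3 + 1) - ln (INR i + 3))) by ring.
      replace (Ca / (INR i + 3)) with (Ca * (1 / (INR i + 3))) by (field; apply Rgt_not_eq, INR3).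
      apply Rmult_le_compat_l; lra. }
    replace n with (N + (n - N))%nat in Hs at 1 by lia.
    rewrite sum_range_add in Hs. simpl in Hs, Sl. fold SN in Hs.
    replace (N + (n - N))%nat with n in Su by lia.
    replace (0 + 3) with 3 in Sl by ring.
    assert (Key: 2 * ln (INR m + 3) <= ln (INR n + 2) + K).
    { apply Rmult_le_reg_l with Ca; auto.
      replace (Ca * (ln (INR n + 2) + K)) with (Ca * ln (INR n + 2) + 2 * (SN + Ca * ln 3 - Ca / 2 * ln (INR N + 2))) by (unfold K; field; lra).
      lra. }
    pose proof (final_ln _ _ _ (INR2 n) (INR3 m) Key) as F.
    pose proof (INR3 m). pose proof (INR3 n).
    assert (A1: alpha n <= Ca * (1 / (INR n + 2))).
    { eapply Rle_trans. apply Hab; lia.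
      assert (1 / (INR n + 3) <= 1 / (INR n + 2)).
      { unfold Rdiv; rewrite !Rmult_1_l. apply Rinv_le_contravar; [apply INR2|lra]. }
      assert (0 <= 1 / (INR n + 3)) by (left; apply Rdiv_lt_0_compat; lra).
      nra. }
    pose proof (exp_pos K) as E.
    eapply Rle_trans; [apply A1|]. eapply Rle_trans; [apply Rmult_le_compat_l; [lra|apply F]|].
    rewrite HT. right. field. lra.
Qed.


Lemma pow_mvt p x : 0 < p < 1 -> 0 < x ->
  p * Rpower (x+1) (p-1) <= Rpower (x+1) p - Rpower x p <= p * Rpower x (p-1).
Proof.
  intros Hp Hx.
  destruct (MVT_cor2 (fun y => Rpower y p) (fun c => p * Rpower c (p-1)) x (x+1) ltac:(lra))
    as [c [Hc1 Hc2]].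
  { intros c Hc. apply derivable_pt_lim_power. lra. }
  rewrite Hc1. replace (x + 1 - x) with 1 by ring. rewrite Rmult_1_r.
  assert (l1: ln x <= ln c) by (apply ln_le_mono; lra).
  assert (l2: ln c <= ln (x+1)) by (apply ln_le_mono; lra).
  unfold Rpower. split; apply Rmult_le_compat_l; try lra; apply exp_le_mono; nra.
Qed.


Lemma div_Rpower Ca x nu : Ca / Rpower x nu = Ca * Rpower x ((1 - nu) - 1).
Proof. replace (1 - nu - 1) with (- nu) by ring. rewrite Rpower_Ropp. reflexivity. Qed.

Lemma case_b Ca alpha T tm : 0 < Ca -> setup_b Ca alpha T -> is_switch_seq alpha T tm ->
  exists (C : R) (m0 : nat),
    forall m : nat, (m0 <= m)%nat ->
      forall t : nat, (tm m <= t)%nat -> alpha t <= C * (T m) ^ 2.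
Proof.
  intros HCa [nu [nu2 [Hnu [Hnu2 [Ha HT]]]]] Hsw.
  apply reduce with (tm := tm); auto.
  - intros m; rewrite HT. apply Rdiv_lt_0_compat; auto using Rpower_pos.
  - intros t; rewrite !Ha, S_INR. pose proof (INR3 t). unfold Rdiv.
    apply Rmult_le_compat_l; [lra|].
    pose proof (Rpower_pos (INR t + 3) nu).
    apply Rinv_le_contravar; auto.
    apply Rle_Rpower_l; [lra| split; lra].
  - set (p := 1 - nu). set (q := 1 - nu2).
    assert (Hp: 0 < p < 1) by (unfold p; lra).
    assert (Hlt1: nu / (2 - nu) < 1).
    { apply Rmult_lt_reg_r with (2 - nu); [lra|]. replace (nu / (2 - nu) * (2 - nu)) with nu by (field; lra). lra. }
    assert (Hq: 0 < q < 1) by (unfold q; lra).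
    set (B := Rpower 3 q).
    assert (HB: 0 < B) by apply Rpower_pos.
    destruct (INR_archimed 1 (exp (ln (2 * B) / q)) ltac:(lra)) as [m0 Hm0].
    set (c0 := ln (p / (2 * q))).
    exists (exp (- (nu * c0 / p)) / Ca), m0. intros m n Hm Hn Hs.
    assert (Su: sum_range alpha 0 n <= Ca / p * Rpower (INR (0 + n) + 2) p - Ca / p * Rpower (INR 0 + 2) p).
    { apply (tele_le alpha (fun k => Ca / p * Rpower (INR k + 2) p)). intros i _.
      rewrite Ha, S_INR, div_Rpower. fold p.
      pose proof (pow_mvt p (INR i + 2) Hp (INR2 i)) as [H1 _].
      replace (INR i + 1 + 2) with (INR i + 2 + 1) by ring.
      replace (INR i + 3) with (INR i + 2 + 1) by ring.
      replace (Ca / p * Rpower (INR i + 2 + 1) p - Ca / p * Rpower (INR i + 2) p) with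
        (Ca / p * (Rpower (INR i + 2 + 1) p - Rpower (INR i + 2) p)) by ring.
      replace (Ca * Rpower (INR i + 2 + 1) (p - 1)) with (Ca / p * (p * Rpower (INR i + 2 + 1) (p - 1))) by (field; lra).
      apply Rmult_le_compat_l; auto. left; apply Rdiv_lt_0_compat; lra. }
    assert (Sl: Ca / q * Rpower (INR (0 + m) + 3) q - Ca / q * Rpower (INR 0 + 3) q <= sum_range T 0 m).
    { apply (tele_ge T (fun k => Ca / q * Rpower (INR k + 3) q)). intros i _.
      rewrite HT, S_INR, div_Rpower. fold q.
      pose proof (pow_mvt q (INR i + 3) Hq (INR3 i)) as [_ H1].
      replace (INR i + 1 + 3) with (INR i + 3 + 1) by ring.
      replace (Ca / q * Rpower (INR i + 3 + 1) q - Ca / q * Rpower (INR i + 3) q) with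
        (Ca / q * (Rpower (INR i + 3 + 1) q - Rpower (INR i + 3) q)) by ring.
      replace (Ca * Rpower (INR i + 3) (q - 1)) with (Ca / q * (q * Rpower (INR i + 3) (q - 1))) by (field; lra).
      apply Rmult_le_compat_l; auto. left; apply Rdiv_lt_0_compat; lra. }
    simpl in Su, Sl. replace (0 + 3) with 3 in Sl by ring. fold B in Sl.
    pose proof (Rpower_pos (0 + 2) p).
    set (L := ln (INR m + 3)).
    assert (HL: 0 < L) by (unfold L; rewrite <- ln_1; apply ln_increasing; pose proof (pos_INR m); lra).
    set (A := Rpower (INR m + 3) q).
    set (X := Rpower (INR n + 2) p).
    assert (HA2: 2 * B <= A).
    { unfold A, Rpower. rewrite <- (exp_ln (2 * B)) by lra. apply exp_le_mono.
      apply le_INR in Hm.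
      assert (h: exp (ln (2 * B) / q) <= INR m + 3) by lra.
      apply ln_le_mono in h; [|apply exp_pos]. rewrite ln_exp in h. fold L.
      apply Rmult_le_compat_l with (r := q) in h; [|lra].
      replace (q * (ln (2 * B) / q)) with (ln (2 * B)) in h by (field; lra). unfold L in *. lra. }
    assert (HX: p / (2 * q) * A <= X).
    { fold A X in Sl, Su.
      assert (Ca / q * (A / 2) <= Ca / p * X).
      { assert (Ca / q * (A / 2) <= Ca / q * (A - B)).
        { apply Rmult_le_compat_l. left; apply Rdiv_lt_0_compat; lra. lra. }
        assert (0 <= Ca / p * Rpower (0 + 2) p).
        { left; apply Rmult_lt_0_compat; auto. apply Rdiv_lt_0_compat; lra. }
        lra. }
      apply Rmult_le_reg_l with (Ca / p). apply Rdiv_lt_0_compat; lra.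
      replace (Ca / p * (p / (2 * q) * A)) with (Ca / q * (A / 2)) by (field; lra). lra. }
    assert (HAp: 0 < A) by apply Rpower_pos.
    assert (Hc: 0 < p / (2 * q)) by (apply Rdiv_lt_0_compat; lra).
    apply ln_le_mono in HX; [|nra].
    rewrite ln_mult in HX by auto. fold c0 in HX.
    unfold A, X, Rpower in HX. rewrite !ln_exp in HX. fold L in HX.
    assert (Hn23: ln (INR n + 2) <= ln (INR n + 3)) by (apply ln_le_mono; [apply INR2|lra]).
    assert (Hexp: nu * q - 2 * nu2 * p >= 0).
    { unfold p, q. assert (nu2 * (2 - nu) < nu).
      { pose proof (proj2 Hnu2) as h.
        apply Rmult_lt_compat_r with (r := 2 - nu) in h; [|lra].
        replace (nu / (2 - nu) * (2 - nu)) with nu in h by (field; lra). lra. }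
      nra. }
    assert (Goal1: nu * c0 / p + 2 * nu2 * L <= nu * ln (INR n + 3)).
    { apply Rmult_le_reg_l with p; [lra|].
      replace (p * (nu * c0 / p + 2 * nu2 * L)) with (nu * c0 + 2 * nu2 * p * L) by (field; lra).
      assert (e1: nu * (c0 + q * L) <= nu * (p * ln (INR n + 2))) by (apply Rmult_le_compat_l; lra).
      assert (e2: 0 <= (nu * q - 2 * nu2 * p) * L) by (apply Rmult_le_pos; lra).
      assert (e3: p * (nu * ln (INR n + 2)) <= p * (nu * ln (INR n + 3))).
      { apply Rmult_le_compat_l; [lra|]. apply Rmult_le_compat_l; lra. }
      lra. }
    rewrite Ha, HT. unfold Rpower. fold L.
    replace (Ca / exp (nu * ln (INR n + 3))) with (Ca * exp (- (nu * ln (INR n + 3)))) by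
      (rewrite exp_Ropp; field; apply Rgt_not_eq, exp_pos).
    replace (exp (- (nu * c0 / p)) / Ca * (Ca / exp (nu2 * L)) ^ 2) with
      (Ca * exp (- (nu * c0 / p) + - (2 * nu2 * L))).
    2:{ rewrite exp_plus, !exp_Ropp. replace (2 * nu2 * L) with (nu2 * L + nu2 * L) by ring.
        rewrite exp_plus. pose proof (exp_pos (nu2 * L)). pose proof (exp_pos (nu * c0 / p)). field. repeat split; lra. }
    apply Rmult_le_compat_l; [lra|]. apply exp_le_mono. lra.
Qed.


Lemma case_a Ca alpha T tm : 0 < Ca -> setup_a Ca alpha T -> is_switch_seq alpha T tm ->
  exists (C : R) (m0 : nat),
    forall m : nat, (m0 <= m)%nat ->
      forall t : nat, (tm m <= t)%nat -> alpha t <= C * (T m) ^ 2.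
Proof.
  intros HCa [nu1 [Hnu [Ha HT]]] Hsw.
  apply reduce with (tm := tm); auto.
  - intros m; rewrite HT. pose proof (INR3 m). pose proof (Rpower_pos (ln (INR m + 3)) nu1).
    apply Rdiv_lt_0_compat; nra.
  - intros t; rewrite !Ha, S_INR. pose proof (INR3 t). unfold Rdiv.
    apply Rmult_le_compat_l; [lra|]. apply Rinv_le_contravar; lra.
  - destruct (big_ln_pow nu1 (proj1 Hnu)) as [J HJ].
    exists (exp (2 * ln (INR J + 3)) / Ca), J. intros m n Hm Hn Hs.
    assert (Su: sum_range alpha 0 n <= Ca * ln (INR (0 + n) + 2) - Ca * ln (INR 0 + 2)).
    { apply (tele_le alpha (fun k => Ca * ln (INR k + 2))). intros i _.
      rewrite Ha, S_INR. pose proof (ln_diff_ge (INR i + 2) (INR2 i)).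
      replace (INR i + 1 + 2) with (INR i + 2 + 1) by ring.
      replace (INR i + 3) with (INR i + 2 + 1) by ring.
      replace (Ca * ln (INR i + 2 + 1) - Ca * ln (INR i + 2)) with (Ca * (ln (INR i + 2 + 1) - ln (INR i + 2))) by ring.
      unfold Rdiv. rewrite <- (Rmult_1_l (/ (INR i + 2 + 1))). rewrite <- Rmult_assoc, Rmult_1_r.
      apply Rmult_le_compat_l; lra. }
    assert (HTb: forall i, (J <= i)%nat -> 2 * Ca / (INR i + 3) <= T i).
    { intros i Hi. rewrite HT. specialize (HJ i Hi). pose proof (INR3 i). unfold Rdiv.
      apply Rmult_le_compat_r. left; apply Rinv_0_lt_compat; lra. nra. }
    assert (Sl: 2 * Ca * ln (INR (J + (m - J)) + 3) - 2 * Ca * ln (INR J + 3) <= sum_range T J (m - J)).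
    { apply (tele_ge T (fun k => 2 * Ca * ln (INR k + 3))). intros i Hi.
      eapply Rle_trans; [|apply HTb; auto].
      rewrite S_INR. pose proof (ln_diff_le (INR i + 3) (INR3 i)).
      replace (INR i + 1 + 3) with (INR i + 3 + 1) by ring.
      replace (2 * Ca * ln (INR i + 3 + 1) - 2 * Ca * ln (INR i + 3)) with ((2 * Ca) * (ln (INR i + 3 + 1) - ln (INR i + 3))) by ring.
      replace (2 * Ca / (INR i + 3)) with ((2*Ca) * (1 / (INR i + 3))) by (field; apply Rgt_not_eq, INR3).
      apply Rmult_le_compat_l; lra. }
    assert (Tnn: 0 <= sum_range T 0 J).
    { apply sum_range_nonneg. intros i _. rewrite HT. pose proof (INR3 i). pose proof (Rpower_pos (ln (INR i + 3)) nu1).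
      left; apply Rdiv_lt_0_compat; nra. }
    replace m with (J + (m - J))%nat in Hs at 1 by lia.
    rewrite sum_range_add in Hs. simpl in Hs.
    replace (J + (m - J))%nat with m in Sl by lia. simpl in Su.
    assert (Hln2: 0 < ln 2). { pose proof ln_lt_2; lra. }
    assert (Key: 2 * ln (INR m + 3) <= ln (INR n + 2) + 2 * ln (INR J + 3)).
    { replace (0 + 2) with 2 in Su by ring.
      apply Rmult_le_reg_l with Ca; auto. nra. }
    pose proof (final_ln _ _ _ (INR2 n) (INR3 m) Key) as F.
    pose proof (INR3 m). pose proof (INR3 n).
    assert (A1: alpha n <= Ca * (1 / (INR n + 2))).
    { rewrite Ha. unfold Rdiv. rewrite Rmult_1_l. apply Rmult_le_compat_l; [lra|]. apply Rinv_le_contravar; [apply INR2|lra]. }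
    assert (T1: 2 * Ca / (INR m + 3) <= T m) by (apply HTb; auto).
    assert (T2: 0 < 2 * Ca / (INR m + 3)) by (apply Rdiv_lt_0_compat; lra).
    assert (T3: (2 * Ca / (INR m + 3))^2 <= T m ^ 2) by (apply pow_incr; lra).
    pose proof (exp_pos (2 * ln (INR J + 3))) as E.
    eapply Rle_trans; [apply A1|]. eapply Rle_trans; [apply Rmult_le_compat_l; [lra|apply F]|].
    eapply Rle_trans; [|apply Rmult_le_compat_l; [|apply T3]].
    2:{ left; apply Rdiv_lt_0_compat; lra. }
    replace (exp (2 * ln (INR J + 3)) / Ca * (2 * Ca / (INR m + 3)) ^ 2) with
      (4 * (Ca * (exp (2 * ln (INR J + 3)) / (INR m + 3) ^ 2))) by (field; lra).
    assert (0 <= Ca * (exp (2 * ln (INR J + 3)) / (INR m + 3) ^ 2)).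
    { left; apply Rmult_lt_0_compat; auto. apply Rdiv_lt_0_compat; auto. apply pow_lt; lra. }
    lra.
Qed.

Theorem lemma1 (Ca : R) (alpha T : nat -> R) (tm : nat -> nat) :
  0 < Ca ->
  (setup_a Ca alpha T \/ setup_b Ca alpha T \/ setup_c Ca alpha T) ->
  is_switch_seq alpha T tm ->
  exists (C : R) (m0 : nat),
    forall m : nat, (m0 <= m)%nat ->
      forall t : nat, (tm m <= t)%nat -> alpha t <= C * (T m) ^ 2.
Proof.
  intros HCa [H|[H|H]] Hsw.
  - exact (case_a Ca alpha T tm HCa H Hsw).
  - exact (case_b Ca alpha T tm HCa H Hsw).
  - exact (case_c Ca alpha T tm HCa H Hsw).
Qed.
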